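(* Let $m\ge2$, $n\ge1$, and let $\alpha:(\mathbb Z[1/m],+)\to U_n(\mathbb Z[1/m])$ be an injective group homomorphism, with image $H=\alpha(\mathbb Z[1/m])$. Then the isolator $I(H)=\{g\in U_n(\mathbb Z[1/m]): g^k\in H\text{ for some integer }k\ge1\}$ is an abelian subgroup of $U_n(\mathbb Z[1/m])$, and the quotient group $I(H)/H$ has finite exponent.
   Context: $U_n(\mathbb Z[1/m])$ denotes the group of upper triangular $n\times n$ matrices with entries in $\mathbb Z[1/m]$ and all diagonal entries equal to $1$. *)

(* Defs.v *)
From mathcomp Require Import all_boot all_order all_algebra.
Unset Printing Implicit Defensive.
Import Order.TTheory GRing.Theory Num.Theory.
Local Open Scope ring_scope.

Definition Z1m (m : nat) (q : rat) : Prop :=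
  exists (z : int) (k : nat), q = z%:~R / (m%:R ^+ k).

Definition Un (m n : nat) (A : 'M[rat]_n) : Prop :=
  (forall i j : 'I_n, (j < i)%N -> A i j = 0) /\
  (forall i : 'I_n, A i i = 1) /\
  (forall i j : 'I_n, Z1m m (A i j)).

(* alpha : (Z[1/m],+) -> U_n(Z[1/m]) is a group homomorphism
   (alpha is given as a function on rat; only its values on Z[1/m] matter) *)
Definition is_hom_Z1m_Un (m n : nat) (alpha : rat -> 'M[rat]_n) : Prop :=
  (forall x, Z1m m x -> Un m n (alpha x)) /\
  (forall x y, Z1m m x -> Z1m m y -> alpha (x + y) = alpha x *m alpha y).

Definition injective_on_Z1m (m n : nat) (alpha : rat -> 'M[rat]_n) : Prop :=
  forall x y, Z1m m x -> Z1m m y -> alpha x = alpha y -> x = y.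

Definition image_Z1m (m n : nat) (alpha : rat -> 'M[rat]_n) (g : 'M[rat]_n) : Prop :=
  exists x, Z1m m x /\ g = alpha x.

Definition mxpow {n : nat} (g : 'M[rat]_n) (k : nat) : 'M[rat]_n :=
  iter k (mulmx g) 1%:M.

Definition isolator (m n : nat) (H : 'M[rat]_n -> Prop) (g : 'M[rat]_n) : Prop :=
  Un m n g /\ exists k : nat, (0 < k)%N /\ H (mxpow g k).

(* Main.v *)
Require Import Defs.
From mathcomp Require Import all_boot all_order all_algebra.
From mathcomp Require Import zify.
Import Order.TTheory GRing.Theory Num.Theory.
Local Open Scope ring_scope.
Set Implicit Arguments. Unset Strict Implicit.

Definition Fd {n} (d : nat) (M : 'M[rat]_n) : Prop :=
  forall i j : 'I_n, (j < i + d)%N -> M i j = 0.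

Lemma Fd_mul n a b (A B : 'M[rat]_n) : Fd a A -> Fd b B -> Fd (a + b) (A *m B).
Proof.
move=> hA hB i j hij; rewrite !mxE; apply: big1 => k _.
case: (ltnP k (i + a)) => hk; first by rewrite hA // mul0r.
by rewrite hB ?mulr0 //; lia.
Qed.

Lemma Fd_mulR n a b (A B : 'M[rat]_n.+1) : Fd a A -> Fd b B -> Fd (a + b) (A * B).
Proof. by rewrite -mulmxE; apply: Fd_mul. Qed.

Lemma Fd_weak n a b (A : 'M[rat]_n) : (b <= a)%N -> Fd a A -> Fd b A.
Proof. by move=> hb hA i j h; apply: hA; lia. Qed.

Lemma Fd_add n d (A B : 'M[rat]_n) : Fd d A -> Fd d B -> Fd d (A + B).
Proof. by move=> hA hB i j h; rewrite !mxE hA ?hB ?addr0. Qed.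

Lemma Fd_opp n d (A : 'M[rat]_n) : Fd d A -> Fd d (- A).
Proof. by move=> hA i j h; rewrite !mxE hA ?oppr0. Qed.

Lemma Fd_sub n d (A B : 'M[rat]_n) : Fd d A -> Fd d B -> Fd d (A - B).
Proof. by move=> hA hB; apply: Fd_add => //; apply: Fd_opp. Qed.

Lemma Fd_0 n d : Fd d (0 : 'M[rat]_n).
Proof. by move=> i j _; rewrite mxE. Qed.

Lemma Fd_muln n d k (A : 'M[rat]_n) : Fd d A -> Fd d (A *+ k).
Proof. by move=> hA i j h; rewrite mulmxnE hA // mul0rn. Qed.

Lemma Fd_mulnK n d k (A : 'M[rat]_n) : (0 < k)%N -> Fd d (A *+ k) -> Fd d A.
Proof.
move=> hk hA i j h; have := hA i j h; rewrite mulmxnE => /eqP.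
by rewrite mulrn_eq0 => /orP [/eqP hk0|/eqP //]; rewrite hk0 in hk.
Qed.

Lemma Fd_top n (A : 'M[rat]_n) : Fd n A -> A = 0.
Proof. by move=> hA; apply/matrixP => i j; rewrite mxE hA //; have := ltn_ord j; lia. Qed.

Lemma Fd_1 n : Fd 0 (1 : 'M[rat]_n.+1).
Proof. move=> i j h; rewrite mxE; case: eqP => // e; subst; lia. Qed.

Lemma Fd0_of1 n (g : 'M[rat]_n.+1) : Fd 1 (g - 1) -> Fd 0 g.
Proof.
move=> h; have -> : g = (g - 1) + 1 by rewrite subrK.
by apply: Fd_add; [apply: Fd_weak h|apply: Fd_1].
Qed.

Lemma Fd_prod1 n d (A B : 'M[rat]_n.+1) : (1 <= d)%N ->
  Fd d (A - 1) -> Fd d (B - 1) -> Fd d (A * B - 1).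
Proof.
move=> hd hA hB.
have -> : A * B - 1 = (A - 1) * (B - 1) + (A - 1) + (B - 1).
  rewrite mulrBl mulrBr !mul1r mulr1.
  by rewrite addrAC subrK addrA subrK.
apply: Fd_add => //; apply: Fd_add => //.
have := Fd_mulR hA hB; apply: Fd_weak; lia.
Qed.

Lemma Fd_pow1 n d (A : 'M[rat]_n.+1) k : (1 <= d)%N -> Fd d (A - 1) -> Fd d (A ^+ k - 1).
Proof.
move=> hd hA; elim: k => [|k IH]; first by rewrite expr0 subrr; apply: Fd_0.
by rewrite exprS; apply: Fd_prod1.
Qed.

Lemma Fd0_mul n (A B : 'M[rat]_n.+1) : Fd 0 A -> Fd 0 B -> Fd 0 (A * B).
Proof. by move=> hA hB; apply: (Fd_mulR hA hB). Qed.

From mathcomp Require Import ring.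

Lemma core n d (x g h : 'M[rat]_n.+1) : Fd 0 x -> Fd 1 (g - 1) -> Fd 1 (h - 1) ->
  Fd d (x * g - h * x) -> forall k,
  Fd d.+1 (x * g ^+ k - h ^+ k * x - (x * g - h * x) *+ k).
Proof.
move=> hx hg hh hE; set E := x * g - h * x.
elim=> [|k IH]; first by rewrite !expr0 mulr1 mul1r mulr0n !subrr; apply: Fd_0.
set D := x * g ^+ k - h ^+ k * x.
have hD : Fd d D.
  have -> : D = (D - E *+ k) + E *+ k by rewrite subrK.
  by apply: Fd_add; [apply: Fd_weak IH|apply: Fd_muln].
have -> : x * g ^+ k.+1 - h ^+ k.+1 * x - E *+ k.+1 =
    D * (g - 1) + (D - E *+ k) + (h ^+ k - 1) * E.
  rewrite mulrS; set kE := E *+ k.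
  rewrite /D /E !mulrBr !mulrBl !mulr1 !mul1r !exprSr !mulrA.
  apply/matrixP => i j; rewrite !mxE; ring.
apply: Fd_add; first apply: Fd_add => //.
- have := Fd_mulR hD hg; apply: Fd_weak; lia.
- have := Fd_mulR (Fd_pow1 k (leqnn 1) hh) hE; apply: Fd_weak; lia.
Qed.

Lemma root_conj n (x g h : 'M[rat]_n.+1) k : Fd 0 x -> Fd 1 (g - 1) -> Fd 1 (h - 1) ->
  (0 < k)%N -> x * g ^+ k = h ^+ k * x -> x * g = h * x.
Proof.
move=> hx hg hh hk e.
suff H : forall d, Fd d (x * g - h * x).
  by apply/eqP; rewrite -subr_eq0; apply/eqP; apply: Fd_top (H n.+1).
elim=> [|d IH].
  by apply: Fd_sub; apply: Fd0_mul => //; apply: Fd0_of1.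
have := core hx hg hh IH k; rewrite e subrr sub0r => /Fd_opp; rewrite opprK.
by apply: Fd_mulnK.
Qed.

Lemma root_uniq n (g h : 'M[rat]_n.+1) k : Fd 1 (g - 1) -> Fd 1 (h - 1) ->
  (0 < k)%N -> g ^+ k = h ^+ k -> g = h.
Proof.
move=> hg hh hk e; have := @root_conj n 1 g h k (@Fd_1 n) hg hh hk.
by rewrite !mul1r !mulr1; apply.
Qed.

Lemma root_comm n (x g : 'M[rat]_n.+1) k : Fd 0 x -> Fd 1 (g - 1) ->
  (0 < k)%N -> x * g ^+ k = g ^+ k * x -> x * g = g * x.
Proof. by move=> hx hg; apply: root_conj. Qed.

Lemma root_Fd n d (A : 'M[rat]_n.+1) k : (1 <= d)%N -> Fd 1 (A - 1) -> (0 < k)%N ->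
  Fd d (A ^+ k - 1) -> Fd d (A - 1).
Proof.
move=> hd h1 hk hK.
suff H : forall d', (1 <= d' <= d)%N -> Fd d' (A - 1) by apply: H; rewrite hd leqnn.
elim=> [|d' IH] /andP [h0 h2] //.
case: d' IH h0 h2 => [|d'] IH h0 h2 //.
have IH' := IH (ltac:(apply/andP; split; lia)).
have := @core n d'.+1 1 A 1 (@Fd_1 n) h1 (ltac:(rewrite subrr; apply: Fd_0)) _ k.
rewrite !mul1r !mulr1 expr1n => /(_ IH') hc.
have : Fd d'.+2 ((A - 1) *+ k).
  have -> : (A - 1) *+ k = (A ^+ k - 1) - (A ^+ k - 1 - (A - 1) *+ k).
    by rewrite subKr.
  by apply: Fd_sub => //; apply: Fd_weak hK; lia.
by apply: Fd_mulnK.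
Qed.

Lemma Fd_powN n (N : 'M[rat]_n.+1) k : Fd 1 N -> Fd k (N ^+ k).
Proof.
move=> hN; elim: k => [|k IH]; first by rewrite expr0; apply: Fd_1.
rewrite exprSr; have := Fd_mulR IH hN; apply: Fd_weak; lia.
Qed.

Lemma geom n (N : 'M[rat]_n.+1) k : (1 - N) * \sum_(i < k) N ^+ i = 1 - N ^+ k.
Proof.
elim: k => [|k IH]; first by rewrite big_ord0 mulr0 expr0 subrr.
rewrite big_ord_recr /= mulrDr IH mulrBl mul1r exprSr -exprS.
by rewrite -exprSr addrA subrK.
Qed.

Lemma unitri_inv n (g : 'M[rat]_n.+1) : Fd 1 (g - 1) ->
  g \is a GRing.unit /\ g^-1 = \sum_(i < n.+1) (1 - g) ^+ i.
Proof.
move=> hg; have hN : Fd 1 (1 - g) by rewrite -opprB; apply: Fd_opp.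
have e : g * \sum_(i < n.+1) (1 - g) ^+ i = 1.
  have := @geom n (1 - g) n.+1; rewrite subKr => ->.
  by rewrite (Fd_top (Fd_powN (k:=n.+1) hN)) subr0.
have [hu _] := mulmx1_unit (e : g *m _ = 1%:M).
split => //; have := mulKr hu (\sum_(i < n.+1) (1 - g) ^+ i).
by rewrite e mulr1.
Qed.

Lemma Fd0_inv n (g : 'M[rat]_n.+1) : Fd 1 (g - 1) -> Fd 0 g^-1.
Proof.
move=> hg; have [_ ->] := unitri_inv hg.
have hN : Fd 1 (1 - g) by rewrite -opprB; apply: Fd_opp.
apply: (big_ind (Fd 0)); [exact: Fd_0| exact: Fd_add|] => i _.
by apply: Fd_weak (Fd_powN (k:=i) hN).
Qed.

Lemma Fd_inv1 n d (g : 'M[rat]_n.+1) : Fd 1 (g - 1) -> Fd d (g - 1) -> Fd d (g^-1 - 1).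
Proof.
move=> h1 hd; have [hu _] := unitri_inv h1.
have -> : g^-1 - 1 = - (g^-1 * (g - 1)) by rewrite mulrBr mulVr // mulr1 opprB.
by apply: Fd_opp; apply: (Fd_mulR (Fd0_inv h1) hd).
Qed.


Lemma Z1m_int m (z : int) : Z1m m z%:~R.
Proof. by exists z, 0%N; rewrite expr0 divr1. Qed.

Lemma Z1m_nat m (k : nat) : Z1m m k%:R.
Proof. by have := Z1m_int m k. Qed.

Lemma mpow_neq0 m a : (0 < m)%N -> (m%:R : rat) ^+ a != 0.
Proof. by move=> hm; rewrite expf_neq0 // pnatr_eq0 -lt0n. Qed.

Lemma natz_r m (k : nat) : ((m ^ k)%N%:Z)%:~R = (m%:R : rat) ^+ k.
Proof. by rewrite -natrX. Qed.

Lemma Z1m_add m x y : (0 < m)%N -> Z1m m x -> Z1m m y -> Z1m m (x + y).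
Proof.
move=> hm [z1 [a ->]] [z2 [b ->]].
exists (z1 * (m ^ b)%N%:Z + z2 * (m ^ a)%N%:Z), (a + b)%N.
rewrite intrD !intrM !natz_r exprD.
have ha := mpow_neq0 a hm; have hb := mpow_neq0 b hm.
by field; apply/andP.
Qed.

Lemma Z1m_opp m x : Z1m m x -> Z1m m (- x).
Proof. by move=> [z [a ->]]; exists (- z), a; rewrite intrN mulNr. Qed.

Lemma Z1m_mul m x y : (0 < m)%N -> Z1m m x -> Z1m m y -> Z1m m (x * y).
Proof.
move=> hm [z1 [a ->]] [z2 [b ->]]; exists (z1 * z2), (a + b)%N.
rewrite intrM exprD.
have ha := mpow_neq0 a hm; have hb := mpow_neq0 b hm.
by field; apply/andP.
Qed.

Lemma Z1m_sub m x y : (0 < m)%N -> Z1m m x -> Z1m m y -> Z1m m (x - y).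
Proof. by move=> hm hx hy; apply: Z1m_add => //; apply: Z1m_opp. Qed.

Definition ZM m {n} (A : 'M[rat]_n) := forall i j, Z1m m (A i j).

Lemma ZM_add m n (A B : 'M[rat]_n) : (0 < m)%N -> ZM m A -> ZM m B -> ZM m (A + B).
Proof. by move=> hm hA hB i j; rewrite mxE; apply: Z1m_add. Qed.

Lemma ZM_opp m n (A : 'M[rat]_n) : ZM m A -> ZM m (- A).
Proof. by move=> hA i j; rewrite mxE; apply: Z1m_opp. Qed.

Lemma ZM_sub m n (A B : 'M[rat]_n) : (0 < m)%N -> ZM m A -> ZM m B -> ZM m (A - B).
Proof. by move=> hm hA hB; apply: ZM_add => //; apply: ZM_opp. Qed.

Lemma ZM_0 m n : ZM m (0 : 'M[rat]_n).
Proof. by move=> i j; rewrite mxE; apply: (Z1m_nat m 0). Qed.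

Lemma ZM_1 m n : ZM m (1 : 'M[rat]_n.+1).
Proof. by move=> i j; rewrite mxE; apply: Z1m_nat. Qed.

Lemma ZM_mul m n (A B : 'M[rat]_n.+1) : (0 < m)%N -> ZM m A -> ZM m B -> ZM m (A * B).
Proof.
move=> hm hA hB i j; rewrite -mulmxE mxE.
apply: (big_ind (Z1m m)); [exact: (Z1m_nat m 0)| by move=> ? ?; apply: Z1m_add|].
by move=> k _; apply: Z1m_mul.
Qed.

Lemma ZM_pow m n (A : 'M[rat]_n.+1) k : (0 < m)%N -> ZM m A -> ZM m (A ^+ k).
Proof.
move=> hm hA; elim: k => [|k IH]; first by rewrite expr0; apply: ZM_1.
by rewrite exprS; apply: ZM_mul.
Qed.

Lemma ZM_inv m n (g : 'M[rat]_n.+1) : (0 < m)%N -> Fd 1 (g - 1) -> ZM m g -> ZM m g^-1.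
Proof.
move=> hm hg hZ; have [_ ->] := unitri_inv hg.
apply: (big_ind (ZM m)); [exact: ZM_0| by move=> ? ?; apply: ZM_add|] => i _.
by apply: ZM_pow => //; apply: ZM_sub => //; apply: ZM_1.
Qed.

Lemma Un_iff m n (g : 'M[rat]_n.+1) : Un m n.+1 g <-> Fd 1 (g - 1) /\ ZM m g.
Proof.
split.
  move=> [hl [hd hz]]; split => // i j hij; rewrite !mxE.
  case: (ltngtP j i) => h.
  - rewrite hl //; case: (i =P j) => [e|_]; last by rewrite subr0.
    by move: h; rewrite e ltnn.
  - lia.
  - have -> : j = i by apply: val_inj.
    by rewrite hd eqxx subrr.
move=> [hf hz]; split; last split => //.
  move=> i j hij; have := hf i j (ltac:(lia)); rewrite !mxE.
  case: (i =P j) => [e|_]; last by rewrite subr0.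
  by move: hij; rewrite e ltnn.
move=> i; have := hf i i (ltac:(lia)); rewrite !mxE eqxx => /eqP.
by rewrite subr_eq0 => /eqP.
Qed.

Lemma mxpowE n (g : 'M[rat]_n.+1) k : mxpow g k = g ^+ k.
Proof.
elim: k => [|k IH]; first by rewrite /mxpow /= idmxE expr0.
by rewrite /mxpow iterS -/(mxpow g k) IH exprS mulmxE.
Qed.

Lemma Z1m_muln m y k : (0 < m)%N -> Z1m m y -> Z1m m (y *+ k).
Proof. by move=> hm hy; rewrite -mulr_natr; apply: Z1m_mul => //; apply: Z1m_nat. Qed.

Lemma alpha0 m n (alpha : rat -> 'M[rat]_n.+1) : (0 < m)%N ->
  is_hom_Z1m_Un m n.+1 alpha -> alpha 0 = 1.
Proof.
move=> hm [hU hM]; have z0 : Z1m m 0 by apply: (Z1m_nat m 0).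
have [hf _] := (Un_iff m (alpha 0)).1 (hU 0 z0).
have [hu _] := unitri_inv hf.
have := hM 0 0 z0 z0; rewrite addr0 mulmxE => e.
apply: (mulrI hu); by rewrite mulr1 -e.
Qed.

Lemma alpha_muln m n (alpha : rat -> 'M[rat]_n.+1) y k : (0 < m)%N ->
  is_hom_Z1m_Un m n.+1 alpha -> Z1m m y -> alpha (y *+ k) = alpha y ^+ k.
Proof.
move=> hm hh hy; elim: k => [|k IH]; first by rewrite mulr0n expr0 (alpha0 hm hh).
rewrite mulrS exprS (hh.2 _ _ hy (Z1m_muln k hm hy)) IH mulmxE //.
Qed.

Lemma alpha_opp m n (alpha : rat -> 'M[rat]_n.+1) y : (0 < m)%N ->
  is_hom_Z1m_Un m n.+1 alpha -> Z1m m y -> alpha (- y) = (alpha y)^-1.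
Proof.
move=> hm hh hy; have [hf _] := (Un_iff m (alpha y)).1 (hh.1 y hy).
have [hu _] := unitri_inv hf.
have := hh.2 _ _ hy (Z1m_opp hy); rewrite subrr (alpha0 hm hh) mulmxE => e.
by apply: (mulrI hu); rewrite -e mulrV.
Qed.

Lemma alpha_comm m n (alpha : rat -> 'M[rat]_n.+1) x y :
  is_hom_Z1m_Un m n.+1 alpha -> Z1m m x -> Z1m m y ->
  alpha x * alpha y = alpha y * alpha x.
Proof. by move=> hh hx hy; rewrite -!mulmxE -!hh.2 // addrC. Qed.

Definition Iso m n (alpha : rat -> 'M[rat]_n.+1) g :=
  Fd 1 (g - 1) /\ ZM m g /\ exists k, (0 < k)%N /\ exists x, Z1m m x /\ g ^+ k = alpha x.

Lemma IsoE m n (alpha : rat -> 'M[rat]_n.+1) g :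
  isolator m n.+1 (image_Z1m m n.+1 alpha) g <-> Iso m alpha g.
Proof.
rewrite /isolator /Iso /image_Z1m Un_iff; split.
  by move=> [[h1 h2] [k [hk [x [hx e]]]]]; split=> //; split=> //; exists k; split=> //;
     exists x; rewrite -mxpowE.
by move=> [h1 [h2 [k [hk [x [hx e]]]]]]; split=> //; exists k; split=> //;
   exists x; rewrite mxpowE.
Qed.

Lemma Iso_comm m n (alpha : rat -> 'M[rat]_n.+1) g h : (0 < m)%N ->
  is_hom_Z1m_Un m n.+1 alpha -> Iso m alpha g -> Iso m alpha h -> g * h = h * g.
Proof.
move=> hm hh [hg [_ [a [ha [x [hx ex]]]]]] [hh1 [_ [b [hb [y [hy ey]]]]]].
have fx : Fd 0 (alpha x).
  by apply: Fd0_of1; exact: ((Un_iff m (alpha x)).1 (hh.1 x hx)).1.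
have c1 : alpha x * h = h * alpha x.
  by apply: (root_comm fx hh1 hb); rewrite ey (alpha_comm hh).
have := root_comm (Fd0_of1 hh1) hg ha; rewrite ex -c1 => /(_ erefl) <-.
by [].
Qed.

Lemma Iso_1 m n (alpha : rat -> 'M[rat]_n.+1) : (0 < m)%N ->
  is_hom_Z1m_Un m n.+1 alpha -> Iso m alpha 1.
Proof.
move=> hm hh; split; first by rewrite subrr; apply: Fd_0.
split; first by apply: ZM_1.
exists 1%N; split=> //; exists 0; split; first by apply: (Z1m_nat m 0).
by rewrite expr1 (alpha0 hm hh).
Qed.

Lemma Iso_mul m n (alpha : rat -> 'M[rat]_n.+1) g h : (0 < m)%N ->
  is_hom_Z1m_Un m n.+1 alpha -> Iso m alpha g -> Iso m alpha h -> Iso m alpha (g * h).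
Proof.
move=> hm hh Ig Ih; have c := Iso_comm hm hh Ig Ih.
move: Ig Ih => [hg [zg [a [ha [x [hx ex]]]]]] [hh1 [zh [b [hb [y [hy ey]]]]]].
split; first by apply: Fd_prod1.
split; first by apply: ZM_mul.
exists (a * b)%N; split; first by rewrite muln_gt0 ha.
exists (x *+ b + y *+ a); split.
  by apply: Z1m_add => //; apply: Z1m_muln.
rewrite exprMn_comm // exprM mulnC exprM ex ey -(alpha_muln _ hm hh hx) -(alpha_muln _ hm hh hy).
by rewrite -mulmxE -hh.2 //; apply: Z1m_muln.
Qed.

Lemma Iso_inv m n (alpha : rat -> 'M[rat]_n.+1) g : (0 < m)%N ->
  is_hom_Z1m_Un m n.+1 alpha -> Iso m alpha g -> Iso m alpha g^-1.
Proof.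
move=> hm hh [hg [zg [a [ha [x [hx ex]]]]]].
split; first by apply: Fd_inv1.
split; first by apply: ZM_inv.
exists a; split=> //; exists (- x); split; first by apply: Z1m_opp.
by rewrite exprVn ex (alpha_opp hm hh hx).
Qed.

Lemma FdP n d (M : 'M[rat]_n) :
  reflect (Fd d M) [forall i : 'I_n, forall j : 'I_n, ((j < i + d)%N ==> (M i j == 0))].
Proof.
apply: (iffP forallP) => [H i j hij|H i]; first by have := forallP (H i) j; rewrite hij => /eqP.
by apply/forallP => j; apply/implyP => hij; rewrite H.
Qed.

Lemma lead n (M : 'M[rat]_n.+1) : Fd 1 M -> M <> 0 ->
  exists d (i0 j0 : 'I_n.+1), [/\ (1 <= d)%N, Fd d M, (j0 < i0 + d.+1)%N & M i0 j0 != 0].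
Proof.
move=> h1 hM.
suff H : forall d, ~ Fd d.+1 M -> exists d', (1 <= d')%N /\ Fd d' M /\ ~ Fd d'.+1 M.
  have [d' [hd [hF hN]]] := H n.+1 (fun h => hM (Fd_top (Fd_weak (leqnSn _) h))).
  move/FdP: hN; rewrite negb_forall => /existsP [i]; rewrite negb_forall => /existsP [j].
  by rewrite negb_imply => /andP [hij hz]; exists d', i, j; split.
elim=> [|d IH] hN; first by [].
case: (FdP d.+1 M) => hF; last by apply: IH.
by exists d.+1.
Qed.

Lemma prod_id n (A B : 'M[rat]_n.+1) :
  A * B - 1 = (A - 1) * (B - 1) + (A - 1) + (B - 1).
Proof. by rewrite mulrBl mulrBr !mul1r mulr1 addrAC subrK addrA subrK. Qed.

Definition lam n (i0 j0 : 'I_n.+1) (A : 'M[rat]_n.+1) := (A - 1) i0 j0.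

Lemma lam_mul n d (i0 j0 : 'I_n.+1) (A B : 'M[rat]_n.+1) :
  (1 <= d)%N -> (j0 < i0 + d.+1)%N -> Fd d (A - 1) -> Fd d (B - 1) ->
  lam i0 j0 (A * B) = lam i0 j0 A + lam i0 j0 B.
Proof.
move=> hd hij hA hB.
have z : ((A - 1) * (B - 1)) i0 j0 = 0 by apply: (Fd_mulR hA hB); lia.
have e : forall X Y : 'M[rat]_n.+1, (X + Y) i0 j0 = X i0 j0 + Y i0 j0.
  by move=> X Y; rewrite mxE.
by rewrite /lam prod_id !e z add0r.
Qed.

Lemma lam_pow n d (i0 j0 : 'I_n.+1) (A : 'M[rat]_n.+1) k :
  (1 <= d)%N -> (j0 < i0 + d.+1)%N -> Fd d (A - 1) ->
  lam i0 j0 (A ^+ k) = lam i0 j0 A *+ k.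
Proof.
move=> hd hij hA; elim: k => [|k IH]; first by rewrite expr0 /lam subrr mxE mulr0n.
by rewrite exprS (lam_mul hd hij hA (Fd_pow1 k hd hA)) IH mulrS.
Qed.

Lemma lam_inv n d (i0 j0 : 'I_n.+1) (A : 'M[rat]_n.+1) :
  (1 <= d)%N -> (j0 < i0 + d.+1)%N -> Fd 1 (A - 1) -> Fd d (A - 1) ->
  lam i0 j0 A^-1 = - lam i0 j0 A.
Proof.
move=> hd hij h1 hA; have [hu _] := unitri_inv h1.
have := lam_mul hd hij hA (Fd_inv1 h1 hA); rewrite mulrV // {1}/lam subrr mxE.
by move/eqP; rewrite eq_sym addrC addr_eq0 => /eqP.
Qed.

Lemma alpha_int m n d (alpha : rat -> 'M[rat]_n.+1) (i0 j0 : 'I_n.+1) :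
  (0 < m)%N -> is_hom_Z1m_Un m n.+1 alpha -> (1 <= d)%N -> (j0 < i0 + d.+1)%N ->
  Fd d (alpha 1 - 1) -> forall z : int,
  Fd d (alpha z%:~R - 1) /\ lam i0 j0 (alpha z%:~R) = lam i0 j0 (alpha 1) * z%:~R.
Proof.
move=> hm hh hd hij hu.
have z1 : Z1m m 1 by apply: (Z1m_nat m 1).
have hN : forall N : nat, alpha N%:R = alpha 1 ^+ N.
  by move=> N; rewrite -(alpha_muln _ hm hh z1).
case=> N.
  have -> : (Posz N)%:~R = N%:R :> rat by [].
  rewrite hN; split; first by apply: Fd_pow1.
  by rewrite (lam_pow _ hd hij hu) mulr_natr.
rewrite NegzE intrN.
have -> : (Posz N.+1)%:~R = N.+1%:R :> rat by [].
rewrite (alpha_opp hm hh (Z1m_nat m N.+1)) hN.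
have h1 : Fd 1 (alpha 1 ^+ N.+1 - 1).
  apply: Fd_pow1 => //; exact: ((Un_iff m (alpha 1)).1 (hh.1 1 z1)).1.
have hp := Fd_pow1 N.+1 hd hu.
split; first by apply: Fd_inv1.
by rewrite (lam_inv hd hij h1 hp) (lam_pow _ hd hij hu) mulrN mulr_natr.
Qed.

Lemma alpha_G m n d (alpha : rat -> 'M[rat]_n.+1) (i0 j0 : 'I_n.+1) y :
  (0 < m)%N -> is_hom_Z1m_Un m n.+1 alpha -> (1 <= d)%N -> (j0 < i0 + d.+1)%N ->
  Fd d (alpha 1 - 1) -> Z1m m y ->
  Fd d (alpha y - 1) /\ lam i0 j0 (alpha y) = lam i0 j0 (alpha 1) * y.
Proof.
move=> hm hh hd hij hu hy; have hy' := hy; move: hy' => [z [j ey]].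
have hK : y *+ (m ^ j)%N = z%:~R.
  rewrite -mulr_natr natrX ey; have := mpow_neq0 j hm => h; by field.
have [hz lz] := alpha_int hm hh hd hij hu z.
have e : alpha y ^+ (m ^ j)%N = alpha z%:~R by rewrite -(alpha_muln _ hm hh hy) hK.
have h1 : Fd 1 (alpha y - 1) by exact: ((Un_iff m (alpha y)).1 (hh.1 y hy)).1.
have hF : Fd d (alpha y - 1).
  apply: (root_Fd hd h1 (k := (m ^ j)%N)); first by rewrite expn_gt0 hm.
  by rewrite e.
split=> //.
have := lam_pow (m ^ j)%N hd hij hF; rewrite e lz -mulr_natr natrX => h.
apply: (mulIf (mpow_neq0 j hm)); rewrite -h ey.
have := mpow_neq0 j hm => h'; by field.
Qed.

Lemma Iso_pow m n (alpha : rat -> 'M[rat]_n.+1) g k : (0 < m)%N ->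
  is_hom_Z1m_Un m n.+1 alpha -> Iso m alpha g -> Iso m alpha (g ^+ k).
Proof.
move=> hm hh hg; elim: k => [|k IH]; first by rewrite expr0; apply: Iso_1.
by rewrite exprS; apply: Iso_mul.
Qed.

Lemma Iso_alpha m n (alpha : rat -> 'M[rat]_n.+1) y : 
  is_hom_Z1m_Un m n.+1 alpha -> Z1m m y -> Iso m alpha (alpha y).
Proof.
move=> hh hy; have [h1 h2] := (Un_iff m (alpha y)).1 (hh.1 y hy).
by split=> //; split=> //; exists 1%N; split=> //; exists y; rewrite expr1.
Qed.

Lemma Iso_G m n d (alpha : rat -> 'M[rat]_n.+1) (i0 j0 : 'I_n.+1) g :
  (0 < m)%N -> is_hom_Z1m_Un m n.+1 alpha -> (1 <= d)%N -> (j0 < i0 + d.+1)%N ->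
  Fd d (alpha 1 - 1) -> Iso m alpha g -> Fd d (g - 1).
Proof.
move=> hm hh hd hij hu [hg [_ [a [ha [x [hx ex]]]]]].
apply: (root_Fd hd hg ha); rewrite ex.
by have [] := alpha_G hm hh hd hij hu hx.
Qed.

Lemma lam_inj m n d (alpha : rat -> 'M[rat]_n.+1) (i0 j0 : 'I_n.+1) g1 g2 :
  (0 < m)%N -> is_hom_Z1m_Un m n.+1 alpha -> (1 <= d)%N -> (j0 < i0 + d.+1)%N ->
  Fd d (alpha 1 - 1) -> lam i0 j0 (alpha 1) != 0 ->
  Iso m alpha g1 -> Iso m alpha g2 -> lam i0 j0 g1 = lam i0 j0 g2 -> g1 = g2.
Proof.
move=> hm hh hd hij hu hc I1 I2 el.
have G1 := Iso_G hm hh hd hij hu I1; have G2 := Iso_G hm hh hd hij hu I2.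
move: I1 I2 => [h1 [_ [a [ha [x1 [hx1 e1]]]]]] [h2 [_ [b [hb [x2 [hx2 e2]]]]]].
have p1 : g1 ^+ (a * b) = alpha (x1 *+ b) by rewrite exprM e1 (alpha_muln _ hm hh hx1).
have p2 : g2 ^+ (a * b) = alpha (x2 *+ a) by rewrite mulnC exprM e2 (alpha_muln _ hm hh hx2).
have [_ l1] := alpha_G hm hh hd hij hu (Z1m_muln b hm hx1).
have [_ l2] := alpha_G hm hh hd hij hu (Z1m_muln a hm hx2).
have q1 := lam_pow (a * b)%N hd hij G1; have q2 := lam_pow (a * b)%N hd hij G2.
rewrite p1 l1 in q1; rewrite p2 l2 in q2.
have ex : x1 *+ b = x2 *+ a by apply: (mulfI hc); rewrite q1 q2 el.
apply: (root_uniq h1 h2 (k := (a * b)%N)); first by rewrite muln_gt0 ha.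
by rewrite p1 p2 ex.
Qed.

Lemma Iso_exp m n (alpha : rat -> 'M[rat]_n.+1) : (0 < m)%N ->
  is_hom_Z1m_Un m n.+1 alpha -> injective_on_Z1m m n.+1 alpha ->
  exists e : nat, (0 < e)%N /\
    forall g, Iso m alpha g -> exists y, Z1m m y /\ g ^+ e = alpha y.
Proof.
move=> hm hh hinj.
have z1 : Z1m m 1 by apply: (Z1m_nat m 1).
have z0 : Z1m m 0 by apply: (Z1m_nat m 0).
have [h1 _] := (Un_iff m (alpha 1)).1 (hh.1 1 z1).
have hne : alpha 1 - 1 <> 0.
  move=> /eqP; rewrite subr_eq0 -(alpha0 hm hh) => /eqP e.
  by have := hinj _ _ z1 z0 e.
have [d [i0 [j0 [hd hu hij hnz]]]] := lead h1 hne.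
set c := lam i0 j0 (alpha 1).
have hc : c != 0 by [].
have hnum : numq c != 0 by rewrite numq_eq0.
exists `|numq c|%N; split; first by rewrite absz_gt0.
move=> g Ig; set e := `|numq c|%N.
have Gg := Iso_G hm hh hd hij hu Ig.
set r := lam i0 j0 g.
have hr : Z1m m r.
  rewrite /r /lam !mxE; apply: Z1m_sub => //; first by apply: Ig.2.1.
  by apply: Z1m_nat.
have hy : Z1m m (r *+ e / c).
  rewrite -mulr_natr -mulrA; apply: Z1m_mul => //.
  have -> : (e%:R / c) = e%:R / ((numq c)%:~R / (denq c)%:~R) by rewrite divq_num_den.
  rewrite /e; move: hnum; case: (numq c) => p hp /=.
    have -> : p%:R / ((Posz p)%:~R / (denq c)%:~R) = (denq c)%:~R :> rat.
      have hp' : (p%:R : rat) != 0 by rewrite pnatr_eq0; case: p hp.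
      have hd' : ((denq c)%:~R : rat) != 0 by rewrite intr_eq0 denq_neq0.
      have -> : (Posz p)%:~R = p%:R :> rat by [].
      field; exact/andP.
    by apply: Z1m_int.
  have -> : (`|Negz p|%N)%:R / ((Negz p)%:~R / (denq c)%:~R) = (- denq c)%:~R :> rat.
    have hd' : ((denq c)%:~R : rat) != 0 by rewrite intr_eq0 denq_neq0.
    rewrite NegzE intrN abszN absz_nat.
    have hp' : ((p.+1)%:R : rat) != 0 by rewrite pnatr_eq0.
    have -> : (Posz p.+1)%:~R = p.+1%:R :> rat by [].
    field; apply/andP; split; [exact: hd' | by rewrite -mulrS pnatr_eq0].
  by apply: Z1m_int.
exists (r *+ e / c); split => //.
apply: (lam_inj hm hh hd hij hu hc (Iso_pow _ hm hh Ig) (Iso_alpha hh hy)).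
have [_ ->] := alpha_G hm hh hd hij hu hy.
rewrite (lam_pow _ hd hij Gg) -/r.
by rewrite mulrC divfK.
Qed.

Unset Implicit Arguments.

Theorem lemma4p3 (m n : nat) (alpha : rat -> 'M[rat]_n) :
  (2 <= m)%N -> (1 <= n)%N ->
  is_hom_Z1m_Un m n alpha -> injective_on_Z1m m n alpha ->
  let I := isolator m n (image_Z1m m n alpha) in
  (* I(H) is a subgroup of U_n(Z[1/m]) *)
  (I 1%:M /\
   (forall g h, I g -> I h -> I (g *m h)) /\
   (forall g, I g -> I (invmx g))) /\
  (* I(H) is abelian *)
  (forall g h, I g -> I h -> g *m h = h *m g) /\
  (* I(H)/H has finite exponent *)
  (exists e : nat, (0 < e)%N /\
     forall g, I g -> image_Z1m m n alpha (mxpow g e)).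
Proof.
move=> hm2; have hm : (0 < m)%N by lia.
move: alpha; case: n => [|n] alpha hn hh hinj I; first by [].
split; [split; [|split]|split].
- by apply/IsoE; rewrite idmxE; apply: Iso_1.
- by move=> g h /IsoE Ig /IsoE Ih; apply/IsoE; rewrite mulmxE; apply: Iso_mul.
- by move=> g /IsoE Ig; apply/IsoE; exact: (Iso_inv hm hh Ig).
- by move=> g h /IsoE Ig /IsoE Ih; rewrite mulmxE; exact: (Iso_comm hm hh Ig Ih).
- have [e [he H]] := Iso_exp hm hh hinj; exists e; split=> // g /IsoE Ig.
  by have [y [hy ey]] := H g Ig; exists y; rewrite mxpowE.
Qed.
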